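(* Let $\boldsymbol\gamma=(\gamma_1,\dots,\gamma_d,\gamma_{d+1})\in\mathbb R^{d+1}$ with $\gamma_i=-1$ for some $i$, $1\le i\le d$, and let $\mathbf n\in\mathbb N_0^d$ with $n_i\ge1$. Then $$P_{\mathbf n}^{(\gamma,\gamma_{d+1})}(x)=-(|\mathbf n|+\gamma_{d+1})\,x_i\,P_{\mathbf n-e_i}^{(\gamma+2e_i,\gamma_{d+1})}(x),$$ where $\gamma=(\gamma_1,\dots,\gamma_d)$.
   Context: $|x|=x_1+\dots+x_d$, $|\mathbf n|=n_1+\dots+n_d$, $e_i$ the standard basis of $\mathbb R^d$. For $(\gamma,\gamma_{d+1})\in\mathbb R^{d+1}$ and $\mathbf n\in\mathbb N_0^d$, on the interior of $T^d=\{x_i\ge0,|x|\le1\}$, $P_{\mathbf n}^{(\gamma,\gamma_{d+1})}(x)=x_1^{-\gamma_1}\cdots x_d^{-\gamma_d}(1-|x|)^{-\gamma_{d+1}}\frac{\partial^{|\mathbf n|}}{\partial x_1^{n_1}\cdots\partial x_d^{n_d}}\big[x_1^{\gamma_1+n_1}\cdots x_d^{\gamma_d+n_d}(1-|x|)^{\gamma_{d+1}+|\mathbf n|}\big]$. *)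

(* Defs.v *)
From HB Require Import structures.
From mathcomp Require Import all_boot all_order all_algebra.
From mathcomp Require Import all_classical all_reals all_analysis.
Set Implicit Arguments. Unset Strict Implicit. Unset Printing Implicit Defensive.
Import Order.TTheory GRing.Theory Num.Theory.
Import numFieldNormedType.Exports.
Local Open Scope ring_scope.

Section Defs.
Variables (R : realType) (d : nat).

Definition absx (x : 'rV[R]_d) : R := \sum_(j < d) x ord0 j.
Definition absn (n : 'I_d -> nat) : nat := (\sum_(j < d) n j)%N.

Definition evec (i : 'I_d) : 'rV[R]_d := delta_mx ord0 i.

Definition partial (i : 'I_d) (f : 'rV[R]_d -> R) : 'rV[R]_d -> R :=
  fun x => 'D_(evec i) f x.

Definition partialn (n : 'I_d -> nat) (f : 'rV[R]_d -> R) : 'rV[R]_d -> R :=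
  foldr (fun j g => iter (n j) (partial j) g) f (enum 'I_d).

Definition in_interior (x : 'rV[R]_d) : Prop :=
  (forall j, 0 < x ord0 j) /\ absx x < 1.

Definition jac_weight (gam : 'rV[R]_d) (gd1 : R) (n : 'I_d -> nat)
  (x : 'rV[R]_d) : R :=
  (\prod_(j < d) (x ord0 j) `^ (gam ord0 j + (n j)%:R)) *
  (1 - absx x) `^ (gd1 + (absn n)%:R).

Definition Pjac (gam : 'rV[R]_d) (gd1 : R) (n : 'I_d -> nat)
  (x : 'rV[R]_d) : R :=
  (\prod_(j < d) (x ord0 j) `^ (- gam ord0 j)) * (1 - absx x) `^ (- gd1) *
  partialn n (jac_weight gam gd1 n) x.

Definition nsub (n : 'I_d -> nat) (i : 'I_d) : 'I_d -> nat :=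
  fun j => if j == i then (n j).-1 else n j.

End Defs.

(* Main.v *)
Require Import Defs.
From HB Require Import structures.
From mathcomp Require Import all_boot all_order all_algebra.
From mathcomp Require Import all_classical all_reals all_analysis.
From mathcomp Require Import ring lra.
Import Order.TTheory GRing.Theory Num.Theory.
Import numFieldNormedType.Exports.
Local Open Scope ring_scope.
Set Implicit Arguments. Unset Strict Implicit. Unset Printing Implicit Defensive.

Section S.
Variables (R : realType) (d : nat).

Lemma is_derive_dir (f : 'rV[R]_d -> R) x v D :
  is_derive (0:R) 1 (fun t : R => f (t *: v + x)) D -> is_derive x v f D.
Proof.
have E : (fun h : R => h^-1 *: ((f \o shift x) (h *: v) - f x)) =
  (fun h : R => h^-1 *: (((fun t : R => f (t *: v + x)) \o shift 0) (h *: 1) - f (0 *: v + x))).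
  by apply/funext => h /=; rewrite scale0r add0r addr0 -[h%:A]/(h * 1) mulr1.
case=> Hd Hv; split; first by rewrite /derivable E.
by rewrite /derive E.
Qed.

Lemma near_U (x : 'rV[R]_d) : in_interior x -> \forall y \near x, in_interior y.
Proof.
case=> Hx Ha.
have Hj : forall j : 'I_d, \forall y \near x, 0 < (y : 'rV[R]_d) ord0 j.
  move=> j.
  have := @coord_continuous R 1 d ord0 j x.
  move=> /(_ [set r : R | 0 < r]%classic) ; apply.
  by apply: open_nbhs_nbhs; split; [exact: open_gt | exact: Hx].
have Hs : \forall y \near x, absx (y : 'rV[R]_d) < 1.
  have c : continuous (@absx R d).
    move=> y; apply: differentiable_continuous.
    have -> : @absx R d = \sum_(j < d) (fun y : 'rV[R]_d => y ord0 j).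
      by apply/funext => z; rewrite /absx fct_sumE.
    apply: differentiable_sum => j.
    exact: differentiable_coord.
  have := c x; move=> /(_ [set r : R | r < 1]%classic); apply.
  by apply: open_nbhs_nbhs; split; [exact: open_lt | exact: Ha].
near=> y; split; last by near: y.
by near: y; apply: filter_forall.
Unshelve. all: by end_near. Qed.
End S.

Section S.
Variables (R : realType).

Lemma is_derive_comp1 (f g : R -> R) (x df dg : R) :
  is_derive x (1:R) f df -> is_derive (f x) (1:R) g dg -> is_derive x (1:R) (g \o f) (dg * df).
Proof.
case=> Hf1 Hf2 [Hg1 Hg2]; split.
  apply: diff_derivable; apply: differentiable_comp; exact/derivable1_diffP.
by rewrite -derive1E derive1_comp // !derive1E Hf2 Hg2.
Qed.

Lemma is_derive_shiftpow (p a : R) : 0 < p ->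
  is_derive (0:R) 1 (fun t : R => (t + p) `^ a) (a * p `^ (a - 1)).
Proof.
move=> p0.
have H := @is_derive_comp1 (fun t => t + p) (fun y : R => y `^ a) 0 1 (a * p `^ (a - 1)).
rewrite mulr1 in H; apply: H; first exact: is_derive_shift.
by rewrite add0r; apply: is_derive1_powR.
Qed.

Lemma is_derive_subpow (s m : R) : 0 < s ->
  is_derive (0:R) 1 (fun t : R => (s - t) `^ m) (- (m * s `^ (m - 1))).
Proof.
move=> s0.
have H := @is_derive_comp1 (fun t => s - t) (fun y : R => y `^ m) 0 (-1) (m * s `^ (m - 1)).
rewrite mulrN1 in H; apply: H.
  have -> : (fun t : R => s - t) = cst s - id by apply/funext.
  have HB := (@is_deriveB _ _ _ (cst s) id (0:R) (1:R) 0 1 (is_derive_cst _ _ _) (is_derive_id _ _)). rewrite sub0r in HB. exact HB.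
by rewrite subr0; apply: is_derive1_powR.
Qed.
End S.

Section S.
Variables (R : realType) (d : nat).

Definition mono (a : 'rV[R]_d) (m : R) (x : 'rV[R]_d) : R :=
  (\prod_(j < d) x ord0 j `^ a ord0 j) * (1 - absx x) `^ m.

Lemma evecE (k j : 'I_d) : evec R k ord0 j = (j == k)%:R.
Proof. by rewrite /evec mxE eqxx. Qed.

Lemma absx_shift t k (x : 'rV[R]_d) : absx (t *: evec R k + x) = t + absx x.
Proof.
rewrite /absx; under eq_bigr do rewrite !mxE eqxx andTb.
rewrite big_split /=; congr (_ + _).
rewrite (bigD1 k) //= eqxx mulr1 big1 ?addr0 // => j /negbTE ->.
by rewrite mulr0.
Qed.

Lemma mono_shift a m k (x : 'rV[R]_d) t :
  mono a m (t *: evec R k + x) =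
  (\prod_(j < d | j != k) x ord0 j `^ a ord0 j) *
  ((t + x ord0 k) `^ a ord0 k * ((1 - absx x) - t) `^ m).
Proof.
rewrite /mono absx_shift (bigD1 k) //= !mxE eqxx andTb eqxx mulr1.
rewrite (eq_bigr (fun j => x ord0 j `^ a ord0 j)); last first.
  by move=> j /negbTE jk; rewrite !mxE eqxx andTb jk mulr0 add0r.
by rewrite opprD addrA [1 - t - _]addrAC -mulrA mulrCA.
Qed.

Lemma mono_split a m k (x : 'rV[R]_d) :
  mono a m x = (\prod_(j < d | j != k) x ord0 j `^ a ord0 j) *
  (x ord0 k `^ a ord0 k * (1 - absx x) `^ m).
Proof. by rewrite /mono (bigD1 k) //=; ring. Qed.

Lemma dmono a m k (x : 'rV[R]_d) : in_interior x ->
  is_derive x (evec R k) (mono a m)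
    (a ord0 k * mono (a - evec R k) m x - m * mono a (m - 1) x).
Proof.
case=> Hx Ha.
apply: is_derive_dir.
set C := \prod_(j < d | j != k) x ord0 j `^ a ord0 j.
have -> : (fun t : R => mono a m (t *: evec R k + x)) =
   cst C * ((fun t : R => (t + x ord0 k) `^ a ord0 k) * (fun t : R => ((1 - absx x) - t) `^ m)).
  by apply/funext => t; rewrite mono_shift.
have s0 : 0 < 1 - absx x by rewrite subr_gt0.
have H1 := @is_derive_shiftpow R _ (a ord0 k) (Hx k).
have H2 := @is_derive_subpow R _ m s0.
have H12 := is_deriveM H1 H2.
have H0 := @is_derive_cst R R^o R C 0 1.
have H := is_deriveM H0 H12.
apply: (is_derive_eq H).
rewrite (mono_split (a - evec R k) _ k) (mono_split a (m-1) k).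
rewrite (eq_bigr (fun j => x ord0 j `^ a ord0 j)); last first.
  by move=> j /negbTE jk; rewrite !mxE eqxx andTb jk subr0.
rewrite !mxE eqxx andTb eqxx -/C /= add0r subr0 /cst.
rewrite /GRing.scale /= mulr0 addr0. ring.
Qed.
End S.

Section S.
Variables (R : realType) (d : nat).
Notation U := (@in_interior R d).

Definition term := (R * 'rV[R]_d * R)%type.
Definition evalL (L : seq term) (x : 'rV[R]_d) : R :=
  \sum_(p <- L) p.1.1 * mono p.1.2 p.2 x.
Fixpoint dL (k : 'I_d) (L : seq term) : seq term :=
  match L with
  | [::] => [::]
  | p :: L' => (p.1.1 * p.1.2 ord0 k, p.1.2 - evec R k, p.2)
               :: (- (p.1.1 * p.2), p.1.2, p.2 - 1) :: dL k L'
  end.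

Definition eqU (f g : 'rV[R]_d -> R) := forall y, U y -> f y = g y.

Lemma evalL_nil : evalL [::] = cst 0.
Proof. by apply/funext => y; rewrite /evalL big_nil. Qed.

Lemma evalL_cons p L :
  evalL (p :: L) = (cst p.1.1 * mono p.1.2 p.2) + evalL L.
Proof. by apply/funext => y; rewrite /evalL big_cons. Qed.

Lemma evalL_cons' p L y :
  evalL (p :: L) y = p.1.1 * mono p.1.2 p.2 y + evalL L y.
Proof. by rewrite /evalL big_cons. Qed.

Lemma evalL_derive L k x : U x ->
  is_derive x (evec R k) (evalL L) (evalL (dL k L) x).
Proof.
move=> Ux; elim: L => [|p L IH].
  rewrite evalL_nil /= /cst; apply: is_derive_cst.
rewrite evalL_cons /= !evalL_cons'.
have H0 := @is_derive_cst R 'rV[R]_d R p.1.1 x (evec R k).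
have H1 := is_deriveM H0 (dmono p.1.2 p.2 k Ux).
have H := is_deriveD H1 IH.
apply: (is_derive_eq H).
rewrite /cst /GRing.scale /=; ring.
Qed.

Lemma partial_evalL L k x : U x -> partial k (evalL L) x = evalL (dL k L) x.
Proof. by move=> Ux; rewrite /partial; have [_ ->] := evalL_derive L k Ux. Qed.

Lemma partial_loc f g k x : eqU f g -> U x -> partial k f x = partial k g x.
Proof.
move=> fg Ux; rewrite /partial; apply: near_eq_derive.
by apply: filterS (near_U Ux) => y Uy; apply: fg.
Qed.

Lemma partial_eqU k f L : eqU f (evalL L) -> eqU (partial k f) (evalL (dL k L)).
Proof. by move=> fL y Uy; rewrite (partial_loc k fL Uy) partial_evalL. Qed.

Definition dLn (n : 'I_d -> nat) (L : seq term) : seq term :=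
  foldr (fun j L => iter (n j) (dL j) L) L (enum 'I_d).

Lemma partialn_eqU n f L : eqU f (evalL L) -> eqU (partialn n f) (evalL (dLn n L)).
Proof.
rewrite /partialn /dLn; elim: (enum 'I_d) => //= j s IH fL.
have := IH fL; elim: (n j) => //= k IHk H.
exact: partial_eqU (IHk H).
Qed.

Lemma dL_congr k L1 L2 : eqU (evalL L1) (evalL L2) ->
  eqU (evalL (dL k L1)) (evalL (dL k L2)).
Proof.
move=> H y Uy; rewrite -!partial_evalL //.
exact: partial_loc.
Qed.

End S.

Section S.
Variables (R : realType) (d : nat).
Notation U := (@in_interior R d).
Notation term := (term R d).
Implicit Types (L : seq term) (y : 'rV[R]_d) (i j k : 'I_d).

Definition eqL (L1 L2 : seq term) := eqU (evalL L1) (evalL L2).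

Lemma eqL_refl L : eqL L L. Proof. by []. Qed.
Lemma eqL_sym L1 L2 : eqL L1 L2 -> eqL L2 L1.
Proof. by move=> H y Uy; rewrite H. Qed.
Lemma eqL_trans L1 L2 L3 : eqL L1 L2 -> eqL L2 L3 -> eqL L1 L3.
Proof. by move=> H1 H2 y Uy; rewrite H1 // H2. Qed.
Lemma eqA_eqL L1 L2 : (forall y, evalL L1 y = evalL L2 y) -> eqL L1 L2.
Proof. by move=> H y _. Qed.

Definition sh (i : 'I_d) (s : R) (L : seq term) : seq term :=
  map (fun p => (p.1.1, p.1.2 + s *: evec R i, p.2)) L.
Definition sc (c : R) (L : seq term) : seq term :=
  map (fun p => (c * p.1.1, p.1.2, p.2)) L.

Lemma rowDE (a : 'rV[R]_d) s (i j : 'I_d) :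
  (a + s *: evec R i) ord0 j = a ord0 j + s * (j == i)%:R.
Proof. by rewrite !mxE eqxx. Qed.
Lemma rowBE (a : 'rV[R]_d) (i j : 'I_d) :
  (a - evec R i) ord0 j = a ord0 j - (j == i)%:R.
Proof. by rewrite !mxE eqxx. Qed.

Lemma evalL_cat L1 L2 y : evalL (L1 ++ L2) y = evalL L1 y + evalL L2 y.
Proof. by rewrite /evalL big_cat. Qed.

Lemma evalL_sc c L y : evalL (sc c L) y = c * evalL L y.
Proof.
elim: L => [|p L IH]; first by rewrite /evalL !big_nil mulr0.
by rewrite /= !evalL_cons' IH /=; ring.
Qed.

Lemma mono_sh i a m s y : U y ->
  mono (a + s *: evec R i) m y = y ord0 i `^ s * mono a m y.
Proof.
case=> Hy _.
rewrite (mono_split _ _ i) (mono_split a m i).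
rewrite (eq_bigr (fun j => y ord0 j `^ a ord0 j)); last first.
  by move=> j /negbTE ji; rewrite rowDE ji mulr0 addr0.
rewrite rowDE eqxx mulr1 powRD; last by rewrite (gt_eqF (Hy i)) implybT.
ring.
Qed.

Lemma evalL_sh i s L y : U y -> evalL (sh i s L) y = y ord0 i `^ s * evalL L y.
Proof.
move=> Uy; elim: L => [|p L IH]; first by rewrite /evalL !big_nil mulr0.
by rewrite /= !evalL_cons' IH /= mono_sh //; ring.
Qed.

Lemma dL_cat k L1 L2 : dL k (L1 ++ L2) = dL k L1 ++ dL k L2.
Proof. by elim: L1 => //= p L IH; rewrite IH. Qed.

Lemma dL_sc k c L y : evalL (dL k (sc c L)) y = evalL (sc c (dL k L)) y.
Proof.
elim: L => [|p L IH] //=.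
by rewrite !evalL_cons' IH /=; ring.
Qed.

Lemma dL_sh_ne i j s L : j != i -> dL j (sh i s L) = sh i s (dL j L).
Proof.
move=> ji; elim: L => [|p L IH] //=.
by rewrite IH rowDE (negbTE ji) mulr0 addr0 addrAC.
Qed.

Lemma dL_sh_i i s L y :
  evalL (dL i (sh i s L)) y = evalL (sc s (sh i (s - 1) L) ++ sh i s (dL i L)) y.
Proof.
elim: L => [|p L IH]; first by rewrite /evalL /= !big_nil.
rewrite /= !evalL_cons' IH !evalL_cat /= !evalL_cons' /=.
have E1 : p.1.2 + s *: evec R i - evec R i = p.1.2 + (s - 1) *: evec R i.
  by rewrite scalerBl scale1r addrA.
have E2 : p.1.2 - evec R i + s *: evec R i = p.1.2 + (s - 1) *: evec R i.
  by rewrite -E1 addrAC.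
rewrite E1 E2 rowDE eqxx mulr1; ring.
Qed.

Lemma dL_comm i j L y : j != i ->
  evalL (dL j (dL i L)) y = evalL (dL i (dL j L)) y.
Proof.
move=> ji; elim: L => [|p L IH] //=.
rewrite !evalL_cons' IH /= !rowBE (negbTE ji) eq_sym (negbTE ji) !subr0.
rewrite [p.1.2 - evec R i - evec R j]addrAC; ring.
Qed.

Lemma cat_congr (L1 L2 L3 L4 : seq term) : eqL L1 L2 -> eqL L3 L4 -> eqL (L1 ++ L3) (L2 ++ L4).
Proof. by move=> H1 H2 y Uy; rewrite !evalL_cat H1 // H2. Qed.
Lemma sc_congr c L1 L2 : eqL L1 L2 -> eqL (sc c L1) (sc c L2).
Proof. by move=> H y Uy; rewrite !evalL_sc H. Qed.
Lemma sh_congr i s L1 L2 : eqL L1 L2 -> eqL (sh i s L1) (sh i s L2).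
Proof. by move=> H y Uy; rewrite !evalL_sh // H. Qed.
Lemma dL_congr' k L1 L2 : eqL L1 L2 -> eqL (dL k L1) (dL k L2).
Proof. exact: dL_congr. Qed.
Lemma iter_congr k N L1 L2 : eqL L1 L2 -> eqL (iter N (dL k) L1) (iter N (dL k) L2).
Proof. by elim: N => //= N IH H; apply: dL_congr'; apply: IH. Qed.

Definition Fs (n : 'I_d -> nat) (s : seq 'I_d) (L : seq term) : seq term :=
  foldr (fun j L => iter (n j) (dL j) L) L s.

Lemma Fs_congr n s L1 L2 : eqL L1 L2 -> eqL (Fs n s L1) (Fs n s L2).
Proof. by elim: s => //= j s IH H; apply: iter_congr; apply: IH. Qed.

Lemma Fs_sh n s i t L : i \notin s -> Fs n s (sh i t L) = sh i t (Fs n s L).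
Proof.
elim: s => //= j s IH; rewrite in_cons negb_or => /andP[ij iS].
rewrite IH //; elim: (n j) => //= N ->; apply: dL_sh_ne.
by rewrite eq_sym.
Qed.

Lemma iter_comm i j N L : j != i ->
  eqL (iter N (dL j) (dL i L)) (dL i (iter N (dL j) L)).
Proof.
move=> ji; elim: N => //= N IH.
apply: eqL_trans (dL_congr' j IH) _.
by apply: eqA_eqL => y; apply: dL_comm.
Qed.

Lemma Fs_dLi n s i L : i \notin s -> eqL (Fs n s (dL i L)) (dL i (Fs n s L)).
Proof.
elim: s => //= j s IH; rewrite in_cons negb_or => /andP[ij iS].
apply: eqL_trans (iter_congr _ _ (IH iS)) _.
by apply: iter_comm; rewrite eq_sym.
Qed.

Lemma iter_sc k N c L : eqL (iter N (dL k) (sc c L)) (sc c (iter N (dL k) L)).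
Proof.
elim: N => //= N IH.
apply: eqL_trans (dL_congr' k IH) _.
by apply: eqA_eqL => y; apply: dL_sc.
Qed.

Lemma Fs_sc n s c L : eqL (Fs n s (sc c L)) (sc c (Fs n s L)).
Proof.
elim: s => //= j s IH.
apply: eqL_trans (iter_congr _ _ IH) _.
exact: iter_sc.
Qed.

End S.

Section S.
Variables (R : realType) (d : nat) (i : 'I_d).
Notation U := (@in_interior R d).
Notation term := (term R d).
Implicit Types (L w v : seq term) (y : 'rV[R]_d).

Definition theta L := sh i 1 (dL i L).
Definition Tk (k : nat) w := iter k (dL i) (sh i k%:R w).

Lemma sh_sh a b L : sh i a (sh i b L) = sh i (b + a) L.
Proof. by elim: L => //= p L ->; rewrite -addrA -scalerDl. Qed.

Lemma sh0 L : eqL (sh i 0 L) L.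
Proof. by move=> y Uy; rewrite evalL_sh // powRr0 mul1r. Qed.

Lemma theta_congr L1 L2 : eqL L1 L2 -> eqL (theta L1) (theta L2).
Proof. by move=> H; apply: sh_congr; apply: dL_congr'. Qed.

Lemma Tk_congr k L1 L2 : eqL L1 L2 -> eqL (Tk k L1) (Tk k L2).
Proof. by move=> H; apply: iter_congr; apply: sh_congr. Qed.

Lemma theta_lin L1 L2 c :
  eqL (theta (L1 ++ sc c L2)) (theta L1 ++ sc c (theta L2)).
Proof.
move=> y Uy; rewrite /theta dL_cat /sh map_cat -/(sh _ _ _) -/(sh _ _ _).
rewrite !evalL_cat !evalL_sc !evalL_sh // dL_sc evalL_sc; ring.
Qed.

Lemma E1 k w : eqL (Tk k.+1 w) (Tk k (theta w ++ sc (k.+1)%:R w)).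
Proof.
rewrite /Tk iterSr; apply: iter_congr.
move=> y Uy; rewrite /theta dL_sh_i !evalL_cat !evalL_sc !evalL_sh //.
have -> : (k.+1)%:R - 1 = k%:R :> R by rewrite -natr1 addrK.
rewrite -natr1 powRD; last by case: Uy => Hy _; rewrite (gt_eqF (Hy i)) implybT.
rewrite !evalL_cat !evalL_sc !evalL_sh //; ring.
Qed.

Lemma E2 k w : eqL (theta (Tk k w)) (Tk k (theta w)).
Proof.
elim: k w => [|k IH] w.
  rewrite /Tk /=; apply: eqL_trans (theta_congr (sh0 w)) _.
  exact: eqL_sym (sh0 _).
apply: eqL_trans (theta_congr (E1 k w)) _.
apply: eqL_trans (IH _) _.
apply: eqL_trans (Tk_congr k (theta_lin _ _ _)) _.
exact: eqL_sym (E1 k (theta w)).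
Qed.

Lemma oneD k v :
  eqL (sh i 1 (iter k.+1 (dL i) (sh i k%:R v))) (iter k (dL i) (sh i (k.+1)%:R (dL i v))).
Proof.
apply: eqL_trans (E2 k v) _.
by rewrite /Tk /theta sh_sh addrC natr1.
Qed.

End S.

Section S.
Variables (R : realType) (d : nat).
Notation U := (@in_interior R d).
Notation term := (term R d).
Implicit Types (L : seq term).

Definition rown (n : 'I_d -> nat) : 'rV[R]_d := \row_j (n j)%:R.

Lemma jac_mono gam gd1 n :
  jac_weight gam gd1 n = mono (gam + rown n) (gd1 + (absn n)%:R).
Proof.
apply/funext => y; rewrite /jac_weight /mono; congr (_ * _).
by apply: eq_bigr => j _; rewrite !mxE.
Qed.

Lemma dLn_Fs n L : dLn n L = Fs n (enum 'I_d) L.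
Proof. by []. Qed.

Lemma Fs_nsub n i s L : i \notin s -> Fs (nsub n i) s L = Fs n s L.
Proof.
elim: s => //= j s IH; rewrite in_cons negb_or => /andP[ij iS].
by rewrite IH // /nsub eq_sym (negbTE ij).
Qed.

Lemma main_list n i k (a : 'rV[R]_d) m s1 s2 :
  i \notin s1 -> i \notin s2 -> a ord0 i = k%:R ->
  eqL (sh i 1 (Fs n s1 (iter k.+1 (dL i) (Fs n s2 [:: (1, a, m)]))))
      (sc (- m) (Fs n s1 (iter k (dL i) (Fs n s2 [:: (1, a + evec R i, m - 1)])))).
Proof.
move=> i1 i2 ai.
set u0 : seq term := [:: (1, a - k%:R *: evec R i, m)].
have -> : [:: (1, a, m)] = sh i k%:R u0 by rewrite /sh /= subrK.
rewrite Fs_sh // -Fs_sh //.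
apply: eqL_trans (Fs_congr _ _ (oneD _ _ _)) _.
apply: eqL_trans (Fs_congr _ _ (iter_congr _ _ (sh_congr _ _ (eqL_sym (Fs_dLi _ _ i2))))) _.
rewrite -Fs_sh //.
have base : eqL (sh i (k.+1)%:R (dL i u0)) (sc (- m) [:: (1, a + evec R i, m - 1)]).
  apply: eqA_eqL => y; rewrite /= !evalL_cons' /=.
  have -> : (a - k%:R *: evec R i) ord0 i = 0.
    by rewrite !mxE !eqxx ai /= mulr1 subrr.
  have -> : a - k%:R *: evec R i + k.+1%:R *: evec R i = a + evec R i.
    by rewrite -natr1 scalerDl scale1r addrA subrK.
  rewrite /evalL !big_nil; ring.
apply: eqL_trans (Fs_congr _ _ (iter_congr _ _ (Fs_congr _ _ base))) _.
apply: eqL_trans (Fs_congr _ _ (iter_congr _ _ (Fs_sc _ _ _ _))) _.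
apply: eqL_trans (Fs_congr _ _ (iter_sc _ _ _ _)) _.
exact: Fs_sc.
Qed.

End S.

Lemma Fs_cat (R : realType) (d : nat) n (s1 s2 : seq 'I_d) j (L : seq (term R d)) :
  Fs n (s1 ++ j :: s2) L = Fs n s1 (iter (n j) (dL j) (Fs n s2 L)).
Proof. by rewrite /Fs foldr_cat. Qed.

Unset Implicit Arguments.
Theorem lemma4p2 (R : realType) (d : nat) (gam : 'rV[R]_d) (gd1 : R)
  (n : 'I_d -> nat) (i : 'I_d) :
  gam ord0 i = -1 -> (1 <= n i)%N ->
  forall x : 'rV[R]_d, in_interior x ->
  Pjac gam gd1 n x =
  - ((absn n)%:R + gd1) * x ord0 i *
    Pjac (gam + 2%:R *: evec R i) gd1 (nsub n i) x.
Proof.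
move=> gi ni x Ux.
have [k nk] : exists k, n i = k.+1 by exists (n i).-1; rewrite prednK.
have ai : (gam + rown R n) ord0 i = k%:R.
  by rewrite !mxE gi nk -natr1; ring.
have Ha' : gam + 2%:R *: evec R i + rown R (nsub n i) = (gam + rown R n) + evec R i.
  apply/rowP => j; rewrite !mxE /nsub.
  case: (eqVneq j i) => [->|ji]; rewrite ?eqxx ?(negbTE ji) /=.
    by rewrite nk /= -natr1; ring.
  by rewrite mulr0 !addr0.
have Habs : (absn (nsub n i))%:R = (absn n)%:R - 1 :> R.
  rewrite /absn (bigD1 i) //= [in RHS](bigD1 i) //= /nsub eqxx nk /=.
  rewrite (eq_bigr (fun j => n j)); last by move=> j /negbTE ->.
  by rewrite addSn -natr1 addrK.
rewrite /Pjac !jac_mono Ha' Habs addrA.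
set a := gam + rown R n.
set m := gd1 + (absn n)%:R.
have E0 : forall (b : 'rV[R]_d) (c : R), eqU (mono b c) (evalL [:: (1, b, c)]).
  by move=> b c y _; rewrite evalL_cons' /evalL big_nil mul1r addr0.
rewrite (partialn_eqU n (E0 a m) Ux) (partialn_eqU (nsub n i) (E0 _ _) Ux).
rewrite !dLn_Fs.
have Hi : i \in enum 'I_d by rewrite mem_enum.
move: (enum_uniq 'I_d).
case/splitPr: Hi => s1 s2.
rewrite cat_uniq /= => /and3P[_ Hs1 /andP[i2 _]].
have i1 : i \notin s1.
  by apply/negP => Hi1; move/negP: Hs1; apply; rewrite Hi1.
rewrite !Fs_cat !Fs_nsub // /nsub eqxx nk /=.
have ML := main_list n m i1 i2 ai Ux.
rewrite evalL_sh // evalL_sc // in ML.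
case: (Ux) => Hx _.
rewrite powRr1 ?(ltW (Hx i)) // in ML.
have Hprod : \prod_(j < d | j != i) x ord0 j `^ (- (gam + 2%:R *: evec R i) ord0 j)
           = \prod_(j < d | j != i) x ord0 j `^ (- gam ord0 j).
  by apply: eq_bigr => j ji; rewrite !mxE eqxx (negbTE ji) /= mulr0 addr0.
rewrite (bigD1 i) //= [X in _ = _ * (X * _ * _)](bigD1 i) //= Hprod.
have -> : - (gam + 2%:R *: evec R i) ord0 i = -1 by rewrite !mxE !eqxx /= gi; ring.
rewrite gi opprK powRr1 ?(ltW (Hx i)) // powR_inv1 ?(ltW (Hx i)) //.
have xi0 : x ord0 i != 0 by rewrite gt_eqF.
set E1 := evalL _ x in ML *.
set E2 := evalL _ x in ML *.
have E1eq : E1 = - m * E2 / x ord0 i.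
  by apply: (mulfI xi0); rewrite ML; field.
by rewrite E1eq /m; field.
Qed.
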